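(* Let $f:[0,1]^n \to \mathbb{R}_+$ be a differentiable DR-submodular function, let $\vec{x}^* \in \arg\max_{\vec{z}\in[0,1]^n} f(\vec{z})$, and let $\alpha \ge 0$ be a constant. Consider a differentiable trajectory $(\vec{x}^{(t)}, \vec{y}^{(t)})_{0 \le t \le 1}$ in $[0,1]^n \times [0,1]^n$ with $\vec{x}^{(0)} = \vec{0}$, $\vec{y}^{(0)} = \vec{1}$, $\vec{x}^{(t)} \le \vec{y}^{(t)}$ for all $t$, and $\vec{x}^{(1)} = \vec{y}^{(1)}$. Let $\vec{p}^{(t)}$ be the projection of $\vec{x}^*$ onto the box $[\vec{x}^{(t)}, \vec{y}^{(t)}]$, i.e. $p^{(t)}_i = \min\{\max\{x^*_i, x^{(t)}_i\}, y^{(t)}_i\}$. Suppose that for all $t \in [0,1]$ $$\frac{d}{dt}\left(\frac{1}{2}\left(f(\vec{x}^{(t)}) + f(\vec{y}^{(t)})\right) + \alpha f(\vec{p}^{(t)})\right) \ge 0,$$ equivalently $\frac12\left(\langle \nabla f(\vec{x}^{(t)}), \dot{\vec{x}}^{(t)}\rangle + \langle \nabla f(\vec{y}^{(t)}), \dot{\vec{y}}^{(t)}\rangle\right) + \alpha \langle \nabla f(\vec{p}^{(t)}), \dot{\vec{p}}^{(t)}\rangle \ge 0$. Then $f(\vec{x}^{(1)}) \ge \frac{\alpha}{1+\alpha} f(\vec{x}^* )$.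
   Context: A function $f:[0,1]^n \to \mathbb{R}_+$ is DR-submodular if for all $\vec{x}\le\vec{y}$ in $[0,1]^n$ (coordinate-wise), all $i\in[n]$ and $\delta\in[0,1]$ with $\vec{x}+\delta\vec{1}_{\{i\}}, \vec{y}+\delta\vec{1}_{\{i\}} \in [0,1]^n$, $f(\vec{x}+\delta\vec{1}_{\{i\}})-f(\vec{x}) \ge f(\vec{y}+\delta\vec{1}_{\{i\}})-f(\vec{y})$. For differentiable $f$ this is equivalent to $\nabla f(\vec{x}) \ge \nabla f(\vec{y})$ whenever $\vec{x}\le\vec{y}$. Dots denote time derivatives. *)

(* Defs.v *)
From HB Require Import structures.
From mathcomp Require Import all_boot all_order all_algebra.
From mathcomp Require Import all_classical all_reals all_analysis.
Set Implicit Arguments. Unset Strict Implicit. Unset Printing Implicit Defensive.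
Import Order.TTheory GRing.Theory Num.Theory.
Import numFieldNormedType.Exports.
Local Open Scope ring_scope.

(* Points of R^n are row vectors 'rV[R]_n; coordinate i of z is z 0 i. *)

Definition in_unit_box (R : realType) (n : nat) (z : 'rV[R]_n) : Prop :=
  forall i : 'I_n, 0 <= z 0 i <= 1.

Definition vle (R : realType) (n : nat) (u v : 'rV[R]_n) : Prop :=
  forall i : 'I_n, u 0 i <= v 0 i.

Definition DR_submodular (R : realType) (n : nat) (f : 'rV[R]_n -> R) : Prop :=
  forall (x y : 'rV[R]_n) (i : 'I_n) (delta : R),
    in_unit_box x -> in_unit_box y -> vle x y ->
    0 <= delta <= 1 ->
    in_unit_box (x + delta *: delta_mx 0 i) ->
    in_unit_box (y + delta *: delta_mx 0 i) ->
    f (x + delta *: delta_mx 0 i) - f x >= f (y + delta *: delta_mx 0 i) - f y.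

Definition box_proj (R : realType) (n : nat) (xs x y : 'rV[R]_n) : 'rV[R]_n :=
  \row_i Num.min (Num.max (xs 0 i) (x 0 i)) (y 0 i).

(* Main.v *)
Require Import Defs.
From HB Require Import structures.
From mathcomp Require Import all_boot all_order all_algebra.
From mathcomp Require Import all_classical all_reals all_analysis.
From mathcomp Require Import lra.
Import Order.TTheory GRing.Theory Num.Theory.
Import numFieldNormedType.Exports.
Local Open Scope ring_scope.
Local Open Scope classical_set_scope.

Lemma max_facts (R : realType) (a b : R) :
  [/\ a <= Num.max a b, b <= Num.max a b & Num.max a b = a \/ Num.max a b = b].
Proof. by case: (leP a b) => h; split; rewrite ?lexx //; by [left|right|apply: ltW]. Qed.

Lemma min_facts (R : realType) (a b : R) :
  [/\ Num.min a b <= a, Num.min a b <= b & Num.min a b = a \/ Num.min a b = b].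
Proof. by case: (leP a b) => h; split; rewrite ?lexx //; by [left|right|apply: ltW]. Qed.

Lemma mm_lip (R : realType) (s u u' v v' A B : R) :
  `|u - u'| < A -> `|v - v'| < B ->
  `|Num.min (Num.max s u) v - Num.min (Num.max s u') v'| < A + B.
Proof.
rewrite !ltr_norml => /andP[h1 h2] /andP[h3 h4].
have [m1 m2 m3] := @max_facts _ s u; have [m4 m5 m6] := @max_facts _ s u'.
move: (Num.max s u) (Num.max s u') m1 m2 m3 m4 m5 m6 => a a' m1 m2 m3 m4 m5 m6.
have [n1 n2 n3] := @min_facts _ a v; have [n4 n5 n6] := @min_facts _ a' v'.
move: (Num.min a v) (Num.min a' v') n1 n2 n3 n4 n5 n6 => c c' n1 n2 n3 n4 n5 n6.
apply/andP; split;
case: m3 => ?; case: m6 => ?; case: n3 => ?; case: n6 => ?; lra.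
Qed.

Lemma bp_lip (R : realType) n (s a a' b b' : 'rV[R]_n) (A B : R) :
  `|a - a'| < A -> `|b - b'| < B ->
  `|box_proj s a b - box_proj s a' b'| < A + B.
Proof.
move=> ha hb.
have ha' : ball a A a' by rewrite -ball_normE.
have hb' : ball b B b' by rewrite -ball_normE.
suff : ball (box_proj s a b) (A + B) (box_proj s a' b') by rewrite -ball_normE.
move: ha' hb'; rewrite /ball /=.
move=> [A0 ha2] [B0 hb2]; split; first exact: addr_gt0.
move=> i j; have := ha2 i j; have := hb2 i j.
rewrite /ball /= !mxE => h1 h2.
move: h1 h2; rewrite [i]ord1 => h1 h2; exact: mm_lip.
Qed.

Lemma bp_box (R : realType) n (s a b : 'rV[R]_n) :
  in_unit_box a -> in_unit_box b -> in_unit_box (box_proj s a b).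
Proof.
move=> ha hb i; rewrite mxE; have /andP[a0 a1] := ha i; have /andP[b0 b1] := hb i.
apply/andP; split.
- by rewrite le_min b0 andbT le_max a0 orbT.
- by rewrite ge_min b1 orbT.
Qed.

Lemma in01_0 (R : realType) : (0:R) \in `[0, 1].
Proof. by rewrite inE /= in_itv /= lexx ler01. Qed.
Lemma in01_1 (R : realType) : (1:R) \in `[0, 1].
Proof. by rewrite inE /= in_itv /= lexx ler01. Qed.

Lemma oo_set (R : realType) (t : R) : t \in `]0, 1[%R -> t \in `]0, 1[.
Proof. by move=> h; rewrite inE /=. Qed.

Theorem lemma3 (R : realType) (n : nat) (f : 'rV[R]_n -> R)
  (xs : 'rV[R]_n) (alpha : R) (x y : R -> 'rV[R]_n) :
  (forall z, in_unit_box z -> 0 <= f z) ->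
  (forall z, in_unit_box z -> differentiable f z) ->
  DR_submodular f ->
  in_unit_box xs -> (forall z, in_unit_box z -> f z <= f xs) ->
  0 <= alpha ->
  (forall t, t \in `[0, 1] -> in_unit_box (x t) /\ in_unit_box (y t)) ->
  {within `[0, 1], continuous x} -> {within `[0, 1], continuous y} ->
  {in `]0, 1[, forall t, derivable x t 1} ->
  {in `]0, 1[, forall t, derivable y t 1} ->
  x 0 = 0 -> y 0 = const_mx 1 ->
  (forall t, t \in `[0, 1] -> vle (x t) (y t)) ->
  x 1 = y 1 ->
  (let Phi := fun t : R =>
     2^-1 * (f (x t) + f (y t)) + alpha * f (box_proj xs (x t) (y t)) in
   {in `]0, 1[, forall t, derivable Phi t 1 /\ 0 <= Phi^`() t}) ->
  f (x 1) >= alpha / (1 + alpha) * f xs.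
Proof.
move=> Hf0 Hdiff _ Hxs Hmax Ha Hbox cx cy dx dy x0 y0 Hle x1 HPhi.
pose Phi := fun t : R =>
     2^-1 * (f (x t) + f (y t)) + alpha * f (box_proj xs (x t) (y t)).
have HPhi' : {in `]0, 1[, forall t, derivable Phi t 1 /\ 0 <= Phi^`() t} := HPhi.
have fc : forall z, in_unit_box z -> f @ z --> f z.
  by move=> z hz; apply: differentiable_continuous; exact: Hdiff.
have key : forall (F : set_system R), Filter F -> forall t, t \in `[0,1] ->
    x @ F --> x t -> y @ F --> y t -> Phi @ F --> Phi t.
  move=> F FF t t01 hx hy.
  have [bx bY] := Hbox t t01.
  have hfx : (fun s => f (x s)) @ F --> f (x t) by apply: cvg_comp hx (fc _ bx).
  have hfy : (fun s => f (y s)) @ F --> f (y t) by apply: cvg_comp hy (fc _ bY).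
  have hp : (fun s => box_proj xs (x s) (y s)) @ F --> box_proj xs (x t) (y t).
    move/cvgrPdist_lt: hx => hx; move/cvgrPdist_lt: hy => hy.
    apply/cvgrPdist_lt => e e0.
    have e20 : 0 < e / 2 by rewrite divr_gt0.
    near=> s; rewrite (splitr e); apply: bp_lip.
      by near: s; apply: hx.
    by near: s; apply: hy.
  have hfp := cvg_comp _ _ hp (fc _ (@bp_box _ _ xs _ _ bx bY)).
  rewrite /Phi; apply: cvgD; apply: cvgM; try exact: cvg_cst.
    exact: cvgD.
  exact: hfp.
have [_ x0r x1l] := (continuous_within_itvP x ltr01).1 cx.
have [_ y0r y1l] := (continuous_within_itvP y ltr01).1 cy.
have cPhi : {within `[0, 1], continuous Phi}.
  apply: derivable_oo_LRcontinuous_within; split.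
  - by move=> t ht; case: (HPhi' t) => //; rewrite inE.
  - by apply: key => //; exact: in01_0.
  - by apply: key => //; exact: in01_1.
have := @ger0_derive1_ndecr R Phi 0 1 (fun t h => (HPhi' t (@oo_set _ _ h)).1)
  (fun t h => (HPhi' t (@oo_set _ _ h)).2) cPhi 0 1 (lexx _) ler01 (lexx _).
have e0 : box_proj xs (x 0) (y 0) = xs.
  apply/rowP => j; rewrite !mxE x0 y0 !mxE.
  have /andP[h0 h1] := Hxs j.
  by rewrite max_l // min_l.
have e1 : box_proj xs (x 1) (y 1) = x 1.
  apply/rowP => j; rewrite !mxE -x1.
  by rewrite min_r // le_max lexx orbT.
rewrite /Phi e0 e1 -x1.
have [b0 b1] := Hbox 0 (in01_0 R).
have f0 := Hf0 _ b0; have f1 := Hf0 _ b1.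
have fx1 := Hf0 _ (Hbox 1 (in01_1 R)).1.
move: f0 f1 fx1; set F0 := f (x 0); set F1 := f (y 0); set G := f (x 1).
set S := f xs => f0 f1 fx1 H.
have a1 : 0 < 1 + alpha by lra.
rewrite mulrAC ler_pdivrMr //.
lra.
Unshelve. all: by end_near.
Qed.
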